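(* Assume $\bar p=\mu\cdot\mathbf p=1/2$ and let $\mathbf r,\tilde{\mathbf r}$ be as in the context. Then $\mathbf r+\tilde{\mathbf r}=(\mu\cdot(\mathbf r+\tilde{\mathbf r}))\mathbf 1$; in particular $\mathbf r+\tilde{\mathbf r}$ is a constant multiple of $\mathbf 1$.
   Context: Let $\mathcal R=\{1,\dots,N\}$ and let $K$ be a stochastic matrix on $\mathcal R$ whose Markov chain has a unique closed irreducible subset; let $\mu$ (row vector) be its unique stationary distribution. Fix $p:\mathcal R\to(0,1)$, $\mathbf p=(p(1),\dots,p(N))^t$, $\mathbf 1$ the all-ones column vector, $I$ the identity, $D_p$ the diagonal matrix with entries $p(i)$, $D_{1-p}=I-D_p$. Define $\mathbf r=(I-K+2(\mathbf 1-\mathbf p)\mu D_{1-p}K)^{-1}\mathbf p-\mathbf 1$ and $\tilde{\mathbf r}=(I-K+2\mathbf p\,\mu D_pK)^{-1}(\mathbf 1-\mathbf p)-\mathbf 1$. *)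

(* Defs.v *)
From HB Require Import structures.
From mathcomp Require Import all_boot all_order all_algebra.
Set Implicit Arguments. Unset Strict Implicit. Unset Printing Implicit Defensive.
Import Order.TTheory GRing.Theory Num.Theory.
Local Open Scope ring_scope.

Section Defs.
Variables (R : realFieldType) (N : nat).

Definition stochastic (K : 'M[R]_N) : Prop :=
  (forall i j, 0 <= K i j) /\ (forall i, \sum_j K i j = 1).

Definition trans_rel (K : 'M[R]_N) : rel 'I_N := fun i j => 0 < K i j.

Definition closed_set (K : 'M[R]_N) (C : {set 'I_N}) : Prop :=
  forall i j, i \in C -> 0 < K i j -> j \in C.

Definition closed_irreducible (K : 'M[R]_N) (C : {set 'I_N}) : Prop :=
  [/\ C != set0, closed_set K C &
      forall i j, i \in C -> j \in C -> connect (trans_rel K) i j].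

Definition unique_closed_irreducible (K : 'M[R]_N) : Prop :=
  exists C, closed_irreducible K C /\ forall C', closed_irreducible K C' -> C' = C.

Definition stationary_distribution (K : 'M[R]_N) (mu : 'rV[R]_N) : Prop :=
  [/\ forall i, 0 <= mu 0 i, \sum_i mu 0 i = 1 & mu *m K = mu].

Definition ones : 'cV[R]_N := const_mx 1.
Definition pvec (p : 'I_N -> R) : 'cV[R]_N := \col_i p i.
Definition Dmat (p : 'I_N -> R) : 'M[R]_N := diag_mx (\row_i p i).
Definition Dmat1 (p : 'I_N -> R) : 'M[R]_N := diag_mx (\row_i (1 - p i)).

Definition rvec (K : 'M[R]_N) (mu : 'rV[R]_N) (p : 'I_N -> R) : 'cV[R]_N :=
  invmx (1%:M - K + 2%:R *: ((ones - pvec p) *m (mu *m Dmat1 p *m K)))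
    *m pvec p - ones.

Definition rtvec (K : 'M[R]_N) (mu : 'rV[R]_N) (p : 'I_N -> R) : 'cV[R]_N :=
  invmx (1%:M - K + 2%:R *: (pvec p *m (mu *m Dmat p *m K)))
    *m (ones - pvec p) - ones.

End Defs.

(* Main.v *)
Require Import Defs.
From HB Require Import structures.
From mathcomp Require Import all_boot all_order all_algebra.
From mathcomp Require Import ring lra.
Import Order.TTheory GRing.Theory Num.Theory.
Set Implicit Arguments. Unset Strict Implicit.
Local Open Scope ring_scope.

Lemma unit_of_ker (R : fieldType) n (M : 'M[R]_n) :
  (forall z : 'cV_n, M *m z = 0 -> z = 0) -> M \in unitmx.
Proof.
move=> H; rewrite -unitmx_tr -row_free_unit -kermx_eq0.
apply/eqP; apply/row_matrixP => i; rewrite row0.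
have h : row i (kermx M^T) *m M^T = 0 by apply/sub_kermxP; exact: row_sub.
apply: trmx_inj; rewrite trmx0; apply: H.
have : (row i (kermx M^T) *m M^T)^T = 0 by rewrite h trmx0.
by rewrite trmx_mul trmxK.
Qed.

Lemma sub_closed (R : realFieldType) N (K : 'M[R]_N) C
  (hC : forall C', closed_irreducible K C' -> C' = C) S i0 :
  closed_set K S -> i0 \in S -> C \subset S.
Proof.
move=> hS i0S.
pose Rr i := [set k | connect (trans_rel K) i k].
have [i Si mini] := arg_minnP (fun i => #|Rr i|) i0S.
have RS : Rr i \subset S.
  apply/subsetP => k; rewrite inE => /connectP [s pth ->].
  clear mini; elim: s i Si pth => //= a s IH j Sj /andP[e pth].
  by apply: IH pth; apply: hS Sj e.
have RC : closed_irreducible K (Rr i).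
  split.
  - by apply/set0Pn; exists i; rewrite inE connect0.
  - move=> k j; rewrite !inE => ik kj; apply: connect_trans ik _.
    by apply: connect1.
  - move=> j k; rewrite !inE => ij ik.
    have sub : Rr j \subset Rr i.
      by apply/subsetP => l; rewrite !inE => jl; apply: connect_trans ij jl.
    have jS : j \in S by apply: (subsetP RS); rewrite inE.
    have mj : (#|Rr i| <= #|Rr j|)%N := mini j jS.
    have Hs : Rr i \subset Rr j.
      by rewrite -(geq_leqif (subset_leqif_card sub)).
    move: Hs => /subsetP /(_ i); rewrite !inE connect0 => /(_ isT) ji.
    exact: connect_trans ji ik.
by rewrite -(hC _ RC).
Qed.

Lemma harm_le_max (R : realFieldType) N (K : 'M[R]_N) C
  (hC : forall C', closed_irreducible K C' -> C' = C) (z : 'cV[R]_N) c :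
  stochastic K -> K *m z = z -> c \in C -> forall i, z i 0 <= z c 0.
Proof.
move=> [Kge0 Ksum] hz cC.
have [m _ mmax] := @arg_maxP _ _ _ c xpredT (fun i => z i 0) isT.
set S := [set i | z i 0 == z m 0].
have cl : closed_set K S.
  move=> i j; rewrite !inE => /eqP zi Kij.
  have e : \sum_k K i k * (z m 0 - z k 0) = 0.
    under eq_bigr do rewrite mulrBr.
    rewrite sumrB -mulr_suml Ksum mul1r.
    have -> : \sum_k K i k * z k 0 = (K *m z) i 0 by rewrite mxE.
    by rewrite hz zi subrr.
  have nn : forall k, true -> 0 <= K i k * (z m 0 - z k 0).
    by move=> k _; rewrite mulr_ge0 // subr_ge0; apply: mmax.
  have := psumr_eq0P nn e (i := j) isT.
  move=> /eqP; rewrite mulf_eq0 (gt_eqF Kij) /= subr_eq0 => /eqP <-.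
  by rewrite eqxx.
have mS : m \in S by rewrite inE.
have := subsetP (sub_closed hC cl mS) c cC; rewrite inE => /eqP ->.
by move=> i; apply: mmax.
Qed.

Lemma harm_const (R : realFieldType) N (K : 'M[R]_N) :
  stochastic K -> unique_closed_irreducible K ->
  forall z : 'cV[R]_N, K *m z = z -> exists t, z = t *: ones R N.
Proof.
move=> hK [C [[Cn0 _ _] hC]] z hz.
have [c cC] := set0Pn _ Cn0.
have h1 := harm_le_max hC hK hz cC.
have hz' : K *m (- z) = - z by rewrite mulmxN hz.
have h2 := harm_le_max hC hK hz' cC.
exists (z c 0); apply/matrixP => i j; rewrite (ord1 j) !mxE mulr1.
apply/le_anti; rewrite h1 /=.
by have := h2 i; rewrite !mxE lerN2.
Qed.

Lemma mx11 (R : pzSemiRingType) m n (a : 'M[R]_(m,1)) (b : 'M[R]_(1,n)) i j :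
  (a *m b) i j = a i 0 * b 0 j.
Proof. by rewrite mxE big_ord1. Qed.

Lemma M_unit (R : realFieldType) N (K : 'M[R]_N) (mu : 'rV[R]_N)
  (v : 'cV[R]_N) (w : 'rV[R]_N) :
  stochastic K -> unique_closed_irreducible K -> mu *m K = mu ->
  (mu *m v) 0 0 != 0 -> (w *m ones R N) 0 0 != 0 ->
  (1%:M - K + 2%:R *: (v *m w)) \in unitmx.
Proof.
move=> hK hU hmu hv hw; apply: unit_of_ker => z hz.
have e1 : mu *m (1%:M - K) = 0 by rewrite mulmxBr mulmx1 hmu subrr.
have wz : w *m z = 0.
  have E : mu *m ((1%:M - K + 2%:R *: (v *m w)) *m z)
      = 2%:R *: ((mu *m v) *m (w *m z)).
    by rewrite mulmxA mulmxDr e1 add0r -scalemxAr -scalemxAl !mulmxA.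
  have := congr1 (mulmx mu) hz.
  rewrite E mulmx0 => /matrixP /(_ 0 0); rewrite [in X in X = _]mxE mx11 [RHS]mxE.
  move=> /eqP; rewrite !mulf_eq0 (negbTE hv) pnatr_eq0 /= => /eqP h.
  by apply/matrixP => i j; rewrite (ord1 i) (ord1 j) h mxE.
move: hz; rewrite mulmxDl -scalemxAl -mulmxA wz mulmx0 scaler0 addr0 mulmxBl mul1mx.
move=> /eqP; rewrite subr_eq0 eq_sym => /eqP /(harm_const hK hU) [t zt].
move: wz; rewrite zt -scalemxAr => /matrixP /(_ 0 0); rewrite [LHS]mxE [RHS]mxE.
move=> /eqP; rewrite mulf_eq0 (negbTE hw) orbF => /eqP ->.
by rewrite scale0r.
Qed.

Lemma K_ones (R : realFieldType) N (K : 'M[R]_N) :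
  stochastic K -> K *m ones R N = ones R N.
Proof.
move=> [_ Ks]; apply/matrixP => i j; rewrite !mxE -(Ks i).
by apply: eq_bigr => k _; rewrite mxE mulr1.
Qed.

Lemma mu_ones (R : realFieldType) N (mu : 'rV[R]_N) :
  \sum_i mu 0 i = 1 -> (mu *m ones R N) 0 0 = 1.
Proof. by move=> h; rewrite mxE -h; apply: eq_bigr => k _; rewrite mxE mulr1. Qed.

Lemma solve_gen (R : realFieldType) N (K : 'M[R]_N) (mu : 'rV[R]_N)
  (u v : 'cV[R]_N) (w : 'rV[R]_N) :
  stochastic K -> unique_closed_irreducible K -> mu *m K = mu ->
  (mu *m v) 0 0 = 1 / 2%:R -> (w *m ones R N) 0 0 = 1 / 2%:R ->
  (1%:M - K) *m (invmx (1%:M - K + 2%:R *: (v *m w)) *m u)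
   = u - (2%:R * (mu *m u) 0 0) *: v.
Proof.
move=> hK hU hmu hv hw.
have h2 : (2%:R : R) != 0 by rewrite pnatr_eq0.
have hv' : (mu *m v) 0 0 != 0 by rewrite hv mul1r invr_eq0.
have hw' : (w *m ones R N) 0 0 != 0 by rewrite hw mul1r invr_eq0.
have U := M_unit hK hU hmu hv' hw'.
set M := 1%:M - K + 2%:R *: (v *m w).
set x := invmx M *m u.
have Mx : M *m x = u by rewrite /x mulmxA mulmxV // mul1mx.
have e1 : mu *m (1%:M - K) = 0 by rewrite mulmxBr mulmx1 hmu subrr.
have E : mu *m (M *m x) = 2%:R *: ((mu *m v) *m (w *m x)).
  by rewrite mulmxA mulmxDr e1 add0r -scalemxAr -scalemxAl !mulmxA.
have wx : (w *m x) 0 0 = (mu *m u) 0 0.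
  have := E; rewrite Mx => /matrixP /(_ 0 0).
  rewrite [in X in _ = X]mxE mx11 hv => ->.
  by rewrite mulrA mul1r divff // mul1r.
have vwx : v *m (w *m x) = (w *m x) 0 0 *: v.
  apply/matrixP => i j; by rewrite (ord1 j) mx11 [RHS]mxE mulrC.
have -> : (1%:M - K) *m x = M *m x - 2%:R *: (v *m (w *m x)).
  by rewrite /M [M in _ = M - _]mulmxDl -scalemxAl -mulmxA addrK.
by rewrite Mx vwx wx scalerA.
Qed.

Theorem lemma4p4 (R : realFieldType) (N : nat) (K : 'M[R]_N) (mu : 'rV[R]_N)
    (p : 'I_N -> R) :
  stochastic K ->
  unique_closed_irreducible K ->
  stationary_distribution K mu ->
  (forall i, 0 < p i < 1) ->
  (mu *m pvec p) 0 0 = 1 / 2%:R ->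
  rvec K mu p + rtvec K mu p
    = ((mu *m (rvec K mu p + rtvec K mu p)) 0 0) *: ones R N.
Proof.
move=> hK hU [_ hsum hmu] _ hp.
have m1 := mu_ones hsum.
have hq : (mu *m (ones R N - pvec p)) 0 0 = 1 / 2%:R.
  rewrite mulmxBr mxE m1 mxE hp.
  have h2 : (2%:R : R) != 0 by rewrite pnatr_eq0.
  apply: (mulfI h2); rewrite mulrBr mulr1 !mul1r divff //.
  by rewrite -[2%:R]/(1 + 1 : R) addrK.
have D1 : Dmat1 p *m ones R N = ones R N - pvec p.
  by apply/matrixP => i j; rewrite mul_diag_mx !mxE mulr1.
have D : Dmat p *m ones R N = pvec p.
  by apply/matrixP => i j; rewrite mul_diag_mx !mxE mulr1.
have w1 : (mu *m Dmat1 p *m K *m ones R N) 0 0 = 1 / 2%:R.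
  by rewrite -!mulmxA (K_ones hK) D1 hq.
have w2 : (mu *m Dmat p *m K *m ones R N) 0 0 = 1 / 2%:R.
  by rewrite -!mulmxA (K_ones hK) D hp.
have e1 := solve_gen (pvec p) hK hU hmu hq w1.
have e2 := solve_gen (ones R N - pvec p) hK hU hmu hp w2.
have t2 : 2%:R * (1 / 2%:R) = 1 :> R by rewrite mul1r divff // pnatr_eq0.
rewrite hp hq t2 !scale1r in e1 e2.
set x := invmx _ *m pvec p in e1.
set y := invmx _ *m (ones R N - pvec p) in e2.
have Hr : rvec K mu p + rtvec K mu p = (x + y) - 2%:R *: ones R N.
  by rewrite /rvec /rtvec -/x -/y scaler_nat mulr2n opprD addrACA.
have Hxy : K *m (x + y) = x + y.
  apply/eqP; rewrite eq_sym -subr_eq0; apply/eqP.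
  rewrite -{1}(mul1mx (x + y)) -mulmxBl mulmxDr e1 e2.
  by rewrite addrC subrKA subrr.
rewrite Hr; have [t ->] := harm_const hK hU Hxy.
rewrite -scalerBl -scalemxAr mxE m1 mulr1 //.
Qed.
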